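(* Let $H$ be a separable complex Hilbert space and $T:H\to H$ a hyponormal operator, i.e. $\|T^*h\|\le\|Th\|$ for every $h\in H$. If $T$ is recurrent, then $T$ is unitary.
   Context: $T$ is recurrent if for every non-empty open $U\subset H$ there is a positive integer $k$ with $U\cap T^{-k}(U)\neq\emptyset$. *)

(* Defs.v *)
From HB Require Import structures.
From mathcomp Require Import all_boot all_order all_algebra.
From mathcomp Require Import reals.
From mathcomp.real_closed Require Import complex.
Set Implicit Arguments. Unset Strict Implicit. Unset Printing Implicit Defensive.
Import Order.TTheory GRing.Theory Num.Theory.
Local Open Scope ring_scope.

Definition inner_product (R : realType) (V : lmodType R[i]) (ip : V -> V -> R[i]) : Prop :=
  [/\ (forall (a : R[i]) (x y z : V), ip (a *: x + y) z = a * ip x z + ip y z),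
      (forall x y : V, ip y x = conjc (ip x y)),
      (forall x : V, 0 <= ip x x)
    & (forall x : V, ip x x = 0 -> x = 0)].

Definition hnorm (R : realType) (V : lmodType R[i]) (ip : V -> V -> R[i]) (x : V) : R :=
  Num.sqrt (complex.Re (ip x x)).

Definition complete_ip (R : realType) (V : lmodType R[i]) (ip : V -> V -> R[i]) : Prop :=
  forall u : nat -> V,
    (forall e : R, 0 < e -> exists N : nat, forall m n : nat,
        (N <= m)%N -> (N <= n)%N -> hnorm ip (u m - u n) < e) ->
    exists l : V, forall e : R, 0 < e -> exists N : nat, forall n : nat,
        (N <= n)%N -> hnorm ip (u n - l) < e.

Definition hilbert_space (R : realType) (V : lmodType R[i]) (ip : V -> V -> R[i]) : Prop :=
  inner_product ip /\ complete_ip ip.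

Definition separable (R : realType) (V : lmodType R[i]) (ip : V -> V -> R[i]) : Prop :=
  exists D : nat -> V, forall (x : V) (e : R), 0 < e -> exists n : nat, hnorm ip (x - D n) < e.

Definition is_open (R : realType) (V : lmodType R[i]) (ip : V -> V -> R[i]) (U : V -> Prop) : Prop :=
  forall x : V, U x -> exists e : R, 0 < e /\ forall y : V, hnorm ip (x - y) < e -> U y.

Definition bounded_op (R : realType) (V : lmodType R[i]) (ip : V -> V -> R[i])
  (T : {linear V -> V}) : Prop :=
  exists M : R, forall x : V, hnorm ip (T x) <= M * hnorm ip (x).

Definition is_adjoint (R : realType) (V : lmodType R[i]) (ip : V -> V -> R[i])
  (T Tadj : V -> V) : Prop :=
  forall x y : V, ip (T x) y = ip x (Tadj y).

Definition hyponormal (R : realType) (V : lmodType R[i]) (ip : V -> V -> R[i])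
  (T Tadj : V -> V) : Prop :=
  forall h : V, hnorm ip (Tadj h) <= hnorm ip (T h).

Definition recurrent (R : realType) (V : lmodType R[i]) (ip : V -> V -> R[i])
  (T : V -> V) : Prop :=
  forall U : V -> Prop, is_open ip U -> (exists x, U x) ->
    exists k : nat, (0 < k)%N /\ exists x : V, U x /\ U (iter k T x).

Definition unitary (V : Type) (T Tadj : V -> V) : Prop :=
  (forall x : V, Tadj (T x) = x) /\ (forall x : V, T (Tadj x) = x).

(* Main.v *)
Require Import Defs.
From HB Require Import structures.
From mathcomp Require Import all_boot all_order all_algebra.
From mathcomp Require Import reals.
From mathcomp.real_closed Require Import complex.
From mathcomp Require Import ring lra.
Set Implicit Arguments. Unset Strict Implicit.
Import Order.TTheory GRing.Theory Num.Theory.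
Local Open Scope ring_scope.
Local Open Scope complex_scope.


Lemma ReD (R : realType) (a b : R[i]) : complex.Re (a + b) = complex.Re a + complex.Re b.
Proof. by case: a; case: b. Qed.
Lemma ReN (R : realType) (a : R[i]) : complex.Re (- a) = - complex.Re a.
Proof. by case: a. Qed.
Lemma ReJ (R : realType) (a : R[i]) : complex.Re (conjc a) = complex.Re a.
Proof. by case: a. Qed.
Lemma ReMC (R : realType) (t : R) (a : R[i]) : complex.Re (t%:C * a) = t * complex.Re a.
Proof. case: a => x y /=. ring. Qed.
Lemma ReJMC (R : realType) (t : R) (a : R[i]) : complex.Re (conjc (t%:C) * a) = t * complex.Re a.
Proof. case: a => x y /=. ring. Qed.
Lemma ge0_C (R : realType) (a : R[i]) : 0 <= a -> a = (complex.Re a)%:C.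
Proof. case: a => x y. rewrite lecE /= => /andP[/eqP -> _]. by []. Qed.
Lemma Re_ge0 (R : realType) (a : R[i]) : 0 <= a -> 0 <= complex.Re a.
Proof. case: a => x y. by rewrite lecE /= => /andP[_ ->]. Qed.
Lemma conjD (R : realType) (a b : R[i]) : conjc (a + b) = conjc a + conjc b.
Proof. case: a => x y; case: b => u v /=. by rewrite opprD. Qed.
Lemma conjN (R : realType) (a : R[i]) : conjc (- a) = - conjc a.
Proof. by case: a. Qed.
Lemma conjM (R : realType) (a b : R[i]) : conjc (a * b) = conjc a * conjc b.
Proof. case: a => x y; case: b => u v /=. congr Complex; ring. Qed.


Definition Nq (R : realType) (V : lmodType R[i]) (ip : V -> V -> R[i]) (x : V) : R :=
  complex.Re (ip x x).

Lemma ipDl (R : realType) (V : lmodType R[i]) (ip : V -> V -> R[i]) :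
  inner_product ip -> forall x y z, ip (x + y) z = ip x z + ip y z.
Proof. case=> L _ _ _ x y z. by have := L 1 x y z; rewrite scale1r mul1r. Qed.

Lemma ip0l (R : realType) (V : lmodType R[i]) (ip : V -> V -> R[i]) :
  inner_product ip -> forall z, ip 0 z = 0.
Proof.
move=> hip z. have := ipDl hip 0 0 z. rewrite addr0 => /eqP.
move=> h. have : ip 0 z + ip 0 z - ip 0 z = ip 0 z - ip 0 z by rewrite -(eqP h).
by rewrite addrK subrr.
Qed.

Lemma ipZl (R : realType) (V : lmodType R[i]) (ip : V -> V -> R[i]) :
  inner_product ip -> forall a x z, ip (a *: x) z = a * ip x z.
Proof. move=> hip a x z. case: (hip) => L _ _ _. by rewrite -[a *: x]addr0 L ip0l // addr0. Qed.

Lemma ipNl (R : realType) (V : lmodType R[i]) (ip : V -> V -> R[i]) :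
  inner_product ip -> forall x z, ip (- x) z = - ip x z.
Proof. move=> hip x z. by rewrite -scaleN1r ipZl // mulN1r. Qed.

Lemma ipDr (R : realType) (V : lmodType R[i]) (ip : V -> V -> R[i]) :
  inner_product ip -> forall x y z, ip z (x + y) = ip z x + ip z y.
Proof.
move=> hip x y z. case: (hip) => _ S _ _.
by rewrite S (S x z) (S y z) ipDl // conjD.
Qed.

Lemma ipNr (R : realType) (V : lmodType R[i]) (ip : V -> V -> R[i]) :
  inner_product ip -> forall x z, ip z (- x) = - ip z x.
Proof.
move=> hip x z. case: (hip) => _ S _ _.
by rewrite S (S x z) ipNl // conjN.
Qed.

Lemma ipZr (R : realType) (V : lmodType R[i]) (ip : V -> V -> R[i]) :
  inner_product ip -> forall a x z, ip z (a *: x) = conjc a * ip z x.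
Proof.
move=> hip a x z. case: (hip) => _ S _ _.
by rewrite S (S x z) ipZl // conjM.
Qed.

Lemma ipxx (R : realType) (V : lmodType R[i]) (ip : V -> V -> R[i]) :
  inner_product ip -> forall x, ip x x = (Nq ip x)%:C.
Proof. case=> _ _ P _ x. exact: ge0_C. Qed.

Lemma Nq_ge0 (R : realType) (V : lmodType R[i]) (ip : V -> V -> R[i]) :
  inner_product ip -> forall x, 0 <= Nq ip x.
Proof. case=> _ _ P _ x. exact: Re_ge0. Qed.

Lemma Nq_eq0 (R : realType) (V : lmodType R[i]) (ip : V -> V -> R[i]) :
  inner_product ip -> forall x, Nq ip x = 0 -> x = 0.
Proof. move=> hip x h. case: (hip) => _ _ _ D. apply: D. by rewrite ipxx // h. Qed.

Lemma ReS (R : realType) (V : lmodType R[i]) (ip : V -> V -> R[i]) :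
  inner_product ip -> forall x y, complex.Re (ip y x) = complex.Re (ip x y).
Proof. case=> _ S _ _ x y. by rewrite S ReJ. Qed.

Lemma NqD (R : realType) (V : lmodType R[i]) (ip : V -> V -> R[i]) :
  inner_product ip -> forall x y,
  Nq ip (x + y) = Nq ip x + Nq ip y + 2 * complex.Re (ip x y).
Proof.
move=> hip x y. unfold Nq. rewrite (ipDl hip x y (x + y)) (ipDr hip x y x) (ipDr hip x y y) !ReD (ReS hip y x). ring.
Qed.

Lemma NqN (R : realType) (V : lmodType R[i]) (ip : V -> V -> R[i]) :
  inner_product ip -> forall x, Nq ip (- x) = Nq ip x.
Proof. move=> hip x. unfold Nq. by rewrite (ipNl hip x (- x)) (ipNr hip x x) opprK. Qed.

Lemma NqB (R : realType) (V : lmodType R[i]) (ip : V -> V -> R[i]) :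
  inner_product ip -> forall x y,
  Nq ip (x - y) = Nq ip x + Nq ip y - 2 * complex.Re (ip x y).
Proof. move=> hip x y. rewrite (NqD hip x (- y)) (NqN hip y) (ipNr hip y x) ReN. ring. Qed.

Lemma NqZ (R : realType) (V : lmodType R[i]) (ip : V -> V -> R[i]) :
  inner_product ip -> forall (t : R) x, Nq ip (t%:C *: x) = t ^+ 2 * Nq ip x.
Proof. move=> hip t x. unfold Nq. rewrite (ipZl hip t%:C x (t%:C *: x)) (ipZr hip t%:C x x) ReMC ReJMC. ring. Qed.

Lemma ReZr (R : realType) (V : lmodType R[i]) (ip : V -> V -> R[i]) :
  inner_product ip -> forall (t : R) x y, complex.Re (ip x (t%:C *: y)) = t * complex.Re (ip x y).
Proof. move=> hip t x y. by rewrite (ipZr hip t%:C y x) ReJMC. Qed.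

Lemma CS (R : realType) (V : lmodType R[i]) (ip : V -> V -> R[i]) :
  inner_product ip -> forall x y, complex.Re (ip x y) ^+ 2 <= Nq ip x * Nq ip y.
Proof.
move=> hip x y.
have [|Hy] := eqVneq (Nq ip y) 0.
  move=> /(Nq_eq0 hip) ->. have -> : ip x 0 = 0.
    by have := ipZr hip 0 0 x; rewrite scale0r => ->; case: (ip x 0) => a b /=; congr Complex; ring.
  have h0 : Nq ip (0:V) = 0 by rewrite /Nq (ip0l hip 0).
  by rewrite h0 mulr0 /= expr2 mulr0.
set b := complex.Re (ip x y).
have Ny : 0 < Nq ip y by rewrite lt0r Hy Nq_ge0.
have := Nq_ge0 hip (x + (- b / Nq ip y)%:C *: y).
rewrite (NqD hip x) (NqZ hip) (ReZr hip) -/b => h.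
have h2 : 0 <= Nq ip x * Nq ip y - b ^+ 2.
  have e : Nq ip x * Nq ip y - b ^+ 2 = (Nq ip x + (- b / Nq ip y) ^+ 2 * Nq ip y + 2 * (- b / Nq ip y * b)) * Nq ip y.
    field. by rewrite gt_eqF.
  rewrite e. apply: mulr_ge0 => //. exact: ltW.
lra.
Qed.


Local Close Scope complex_scope.

Lemma hn_ge0 (R : realType) (V : lmodType R[i]) (ip : V -> V -> R[i]) x :
  0 <= hnorm ip x.
Proof. exact: sqrtr_ge0. Qed.

Lemma hn_sq (R : realType) (V : lmodType R[i]) (ip : V -> V -> R[i]) :
  inner_product ip -> forall x, hnorm ip x ^+ 2 = Nq ip x.
Proof. move=> hip x. rewrite /hnorm sqr_sqrtr //. exact: Nq_ge0. Qed.

Lemma sq_le (R : realType) (a b : R) : 0 <= a -> 0 <= b -> a ^+ 2 <= b ^+ 2 -> a <= b.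
Proof. move=> ha hb h. nra. Qed.

Lemma hn_eq0 (R : realType) (V : lmodType R[i]) (ip : V -> V -> R[i]) :
  inner_product ip -> forall x, hnorm ip x = 0 -> x = 0.
Proof. move=> hip x h. apply: (Nq_eq0 hip). by rewrite -(hn_sq hip x) h expr2 mulr0. Qed.

Lemma hn0 (R : realType) (V : lmodType R[i]) (ip : V -> V -> R[i]) :
  inner_product ip -> hnorm ip 0 = 0.
Proof. move=> hip. by rewrite /hnorm (ip0l hip 0) sqrtr0. Qed.

Lemma hnN (R : realType) (V : lmodType R[i]) (ip : V -> V -> R[i]) :
  inner_product ip -> forall x, hnorm ip (- x) = hnorm ip x.
Proof. move=> hip x. rewrite /hnorm. have := NqN hip x. by rewrite /Nq => ->. Qed.

Lemma Re_le (R : realType) (V : lmodType R[i]) (ip : V -> V -> R[i]) :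
  inner_product ip -> forall x y, complex.Re (ip x y) <= hnorm ip x * hnorm ip y.
Proof.
move=> hip x y. have := CS hip x y. rewrite -(hn_sq hip x) -(hn_sq hip y) => h.
have h1 := hn_ge0 ip x. have h2 := hn_ge0 ip y.
have : `|complex.Re (ip x y)| <= hnorm ip x * hnorm ip y.
  apply: sq_le => //. exact: mulr_ge0. by rewrite real_normK ?num_real // exprMn.
move=> h3. apply: le_trans h3. exact: ler_norm.
Qed.

Lemma hnD (R : realType) (V : lmodType R[i]) (ip : V -> V -> R[i]) :
  inner_product ip -> forall x y, hnorm ip (x + y) <= hnorm ip x + hnorm ip y.
Proof.
move=> hip x y. have h1 := hn_ge0 ip x. have h2 := hn_ge0 ip y.
apply: sq_le => //. exact: hn_ge0. exact: addr_ge0.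
rewrite (hn_sq hip) (NqD hip) -(hn_sq hip x) -(hn_sq hip y). have := Re_le hip x y. nra.
Qed.

Lemma hnBC (R : realType) (V : lmodType R[i]) (ip : V -> V -> R[i]) :
  inner_product ip -> forall x y, hnorm ip (x - y) = hnorm ip (y - x).
Proof. move=> hip x y. by rewrite -(hnN hip (x - y)) opprB. Qed.

Lemma hnB_ge (R : realType) (V : lmodType R[i]) (ip : V -> V -> R[i]) :
  inner_product ip -> forall x y, hnorm ip x - hnorm ip y <= hnorm ip (x - y).
Proof.
move=> hip x y. have := hnD hip (x - y) y. rewrite subrK. lra.
Qed.

Lemma ball_open (R : realType) (V : lmodType R[i]) (ip : V -> V -> R[i]) :
  inner_product ip -> forall x e, is_open ip (fun y => hnorm ip (x - y) < e).
Proof.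
move=> hip x e y hy. exists (e - hnorm ip (x - y)). split; first lra.
move=> z hz. have := hnD hip (x - y) (y - z). rewrite addrA subrK. lra.
Qed.


Lemma seq_inc (R : realType) (a : nat -> R) (c : R) :
  (forall j, 0 <= a j) -> (forall j, a j.+1 ^+ 2 <= a j.+2 * a j) ->
  1 <= c -> 0 < a 0 -> c * a 0 <= a 1 -> forall k, c * a 0 <= a k.+1.
Proof.
move=> h0 hp hc ha0 ha1.
have key : forall j, c * a j <= a j.+1 /\ 0 < a j.
  elim=> [|j [IH1 IH2]]; first by split.
  have pos : 0 < a j.+1 by nra.
  split => //.
  have := hp j. move=> hpj.
  have : c * a j.+1 * a j <= a j.+2 * a j by nra.
  by rewrite ler_pM2r.
elim=> [|k IH] //. apply: le_trans IH _. have [h1 h2] := key k.+1. nra.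
Qed.

Lemma seq_dec (R : realType) (a : nat -> R) (c : R) :
  (forall j, 0 <= a j) -> (forall j, a j.+1 ^+ 2 <= a j.+2 * a j) ->
  0 <= c -> c <= 1 -> forall k, a k.+2 <= c * a k.+1 -> a k.+1 <= c * a 0.
Proof.
move=> h0 hp hc0 hc1.
have prop1 : forall j, c * a j < a j.+1 -> c * a j.+1 < a j.+2.
  move=> j h. have hj0 := h0 j. have pos : 0 < a j.+1 by nra.
  rewrite ltNge; apply/negP => h2. have hpj := hp j.
  have : a j.+1 ^+ 2 <= c * a j * a j.+1 by nra.
  have : c * a j * a j.+1 < a j.+1 ^+ 2 by nra.
  lra.
have prop : forall d j, c * a j < a j.+1 -> c * a (j + d)%N < a (j + d)%N.+1.
  move=> d; elim: d => [|d IH] j h; first by rewrite addn0.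
  rewrite addnS. exact: prop1 (IH j h).
move=> k hk.
have all : forall j, (j <= k.+1)%N -> a j.+1 <= c * a j.
  move=> j hj. rewrite leNgt; apply/negP => h.
  have := prop (k.+1 - j)%N j h. rewrite subnKC //. lra.
have mono : forall j, (j <= k.+1)%N -> a j.+1 <= a j.
  move=> j hj. have := all j hj. have := h0 j. nra.
have : forall j, (j <= k)%N -> a j.+1 <= c * a 0.
  elim=> [|j IH] hj; first exact: all.
  apply: le_trans (IH (ltnW hj)). apply: mono. by apply: leq_trans hj _.
by apply.
Qed.


Lemma near_bounds (R : realType) (H : lmodType R[i]) (ip : H -> H -> R[i])
    (T : {linear H -> H}) (L : R) :
  inner_product ip -> 0 <= L -> (forall z, hnorm ip (T z) <= L * hnorm ip z) ->
  forall x z e, hnorm ip (x - z) < e ->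
  [/\ hnorm ip z <= hnorm ip x + e, hnorm ip x - e <= hnorm ip z,
      hnorm ip (T z) <= hnorm ip (T x) + L * e & hnorm ip (T x) - L * e <= hnorm ip (T z)].
Proof.
move=> hip L0 hL x z e he.
have h1 := hnB_ge hip x z. have h2 := hnB_ge hip z x.
rewrite (hnBC hip z x) in h2.
have h3 := hnB_ge hip (T x) (T z). have h4 := hnB_ge hip (T z) (T x).
rewrite (hnBC hip (T z) (T x)) -linearB in h4. rewrite -linearB in h3.
have h5 := hL (x - z). have h6 : L * hnorm ip (x - z) <= L * e.
  apply: ler_wpM2l => //. exact: ltW.
split; lra.
Qed.

Lemma paranormal (R : realType) (H : lmodType R[i]) (ip : H -> H -> R[i])
    (T : {linear H -> H}) (Tadj : H -> H) :
  inner_product ip -> is_adjoint ip T Tadj -> hyponormal ip T Tadj ->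
  forall z, hnorm ip (T z) ^+ 2 <= hnorm ip (T (T z)) * hnorm ip z.
Proof.
move=> hip hadj hhyp z.
rewrite (hn_sq hip). rewrite /Nq (hadj z (T z)).
apply: le_trans (Re_le hip z (Tadj (T z))) _.
rewrite mulrC. apply: ler_wpM2r; first exact: hn_ge0. exact: hhyp.
Qed.


Lemma T_isometry (R : realType) (H : lmodType R[i]) (ip : H -> H -> R[i])
    (T : {linear H -> H}) (Tadj : H -> H) :
  inner_product ip -> bounded_op ip T -> is_adjoint ip T Tadj ->
  hyponormal ip T Tadj -> recurrent ip T ->
  forall x, hnorm ip (T x) = hnorm ip x.
Proof.
move=> hip [M hM] hadj hhyp hrec x.
pose L := `|M| + 1.
have L0 : 0 <= L by rewrite /L; have := normr_ge0 M; lra.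
have hL : forall z, hnorm ip (T z) <= L * hnorm ip z.
  move=> z. apply: le_trans (hM z) _. apply: ler_wpM2r; first exact: hn_ge0.
  rewrite /L. have := ler_norm M. lra.
have hpar : forall y, forall j, hnorm ip (iter j.+1 T y) ^+ 2 <=
    hnorm ip (iter j.+2 T y) * hnorm ip (iter j T y).
  move=> y j. rewrite !iterS. exact: (paranormal hip hadj hhyp).
have hs0 : forall y j, 0 <= hnorm ip (iter j T y) by move=> y j; exact: hn_ge0.
have hx0 := hn_ge0 ip x. have hTx0 := hn_ge0 ip (T x).
have hU : forall e, 0 < e -> exists k, (0 < k)%N /\ exists y,
    hnorm ip (x - y) < e /\ hnorm ip (x - iter k T y) < e.
  move=> e he. apply: hrec; first exact: ball_open.
  exists x. by rewrite subrr (hn0 hip).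
have [hlt|hgt|//] := ltgtP (hnorm ip x) (hnorm ip (T x)).
-
  have ha : 0 < hnorm ip x.
    rewrite lt_neqAle hx0 andbT. apply/eqP => h0.
    have x0 := hn_eq0 hip (esym h0). move: hlt. rewrite x0 linear0 (hn0 hip). lra.
  set a := hnorm ip x in ha hlt hx0 hU *. set b := hnorm ip (T x) in hlt hTx0 *.
  pose c := (a + b) / (2 * a).
  have hca : c * a = (a + b) / 2 by rewrite /c; field; rewrite gt_eqF.
  have hc1 : 1 <= c.
    have : (c - 1) * a >= 0 by rewrite mulrBl hca mul1r; lra.
    rewrite pmulr_lge0 //. lra.
  pose e := (b - a) / (4 * (L + c + 1)).
  have he : L * e + c * e + e = (b - a) / 4.
    rewrite /e. field. apply/negP => /eqP. lra.
  have e0 : 0 < e. rewrite /e divr_gt0 //; lra.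
  have hce : 0 <= c * e by apply: mulr_ge0; lra.
  have hLe : 0 <= L * e by apply: mulr_ge0; lra.
  have [k [hk [y [Uy Uky]]]] := hU e e0.
  have [b1 b2 b3 b4] := near_bounds hip L0 hL Uy.
  have [b5 b6 _ _] := near_bounds hip L0 hL Uky.
  rewrite -/a -/b in b1 b2 b3 b4 b5 b6.
  have hae : e < a.
    rewrite ltNge; apply/negP => h. have : c * (a - e) <= 0.
      apply: mulr_ge0_le0; lra.
    rewrite mulrBr. lra.
  have s0 : 0 < hnorm ip (iter 0 T y) by rewrite /=; lra.
  have s1 : c * hnorm ip (iter 0 T y) <= hnorm ip (iter 1 T y).
    rewrite /=. have : c * hnorm ip y <= c * (a + e) by apply: ler_wpM2l; lra.
    rewrite mulrDr. lra.
  case: k hk Uky b5 b6 => // k _ Uky b5 b6.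
  have := seq_inc (hs0 y) (hpar y) hc1 s0 s1 k.
  have : c * (a - e) <= c * hnorm ip (iter 0 T y) by apply: ler_wpM2l; rewrite /=; lra.
  rewrite mulrBr. lra.
-
  have ha : 0 < hnorm ip x by lra.
  set a := hnorm ip x in ha hgt hx0 hU *. set b := hnorm ip (T x) in hgt hTx0 *.
  pose c := (a + b) / (2 * a).
  have hca : c * a = (a + b) / 2 by rewrite /c; field; rewrite gt_eqF.
  have hc0 : 0 <= c by rewrite /c; apply: divr_ge0; lra.
  have hc1 : c <= 1.
    have : (1 - c) * a >= 0 by rewrite mulrBl hca mul1r; lra.
    rewrite pmulr_lge0 //. lra.
  pose e := (a - b) / (4 * (L + c + 1)).
  have he : L * e + c * e + e = (a - b) / 4.
    rewrite /e. field. apply/negP => /eqP. lra.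
  have e0 : 0 < e. rewrite /e divr_gt0 //; lra.
  have hce : 0 <= c * e by apply: mulr_ge0; lra.
  have hLe : 0 <= L * e by apply: mulr_ge0; lra.
  have hz : forall z, hnorm ip (x - z) < e -> hnorm ip (T z) <= c * hnorm ip z.
    move=> z Uz. have [_ z2 z3 _] := near_bounds hip L0 hL Uz.
    rewrite -/a -/b in z2 z3.
    have : c * (a - e) <= c * hnorm ip z by apply: ler_wpM2l; lra.
    rewrite mulrBr. lra.
  have [k [hk [y [Uy Uky]]]] := hU e e0.
  have [b1 b2 b3 b4] := near_bounds hip L0 hL Uy.
  case: k hk Uky => // k _ Uky.
  have [b5 b6 _ _] := near_bounds hip L0 hL Uky.
  rewrite -/a -/b in b1 b2 b3 b4 b5 b6.
  have := seq_dec (hs0 y) (hpar y) hc0 hc1 (hz _ Uky).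
  have : c * hnorm ip (iter 0 T y) <= c * (a + e) by apply: ler_wpM2l; rewrite /=; lra.
  rewrite mulrDr. lra.
Qed.


Unset Implicit Arguments. Set Strict Implicit.

Theorem proposition8p3 (R : realType) (H : lmodType R[i]) (ip : H -> H -> R[i])
    (T : {linear H -> H}) (Tadj : H -> H) :
  hilbert_space ip -> separable ip ->
  bounded_op ip T -> is_adjoint ip T Tadj ->
  hyponormal ip T Tadj -> recurrent ip T ->
  unitary T Tadj.
Proof.
move=> [hip _] _ hb hadj hhyp hrec.
have iso := T_isometry hip hb hadj hhyp hrec.
have h1 : forall x, Tadj (T x) = x.
  move=> x. apply/eqP. rewrite -subr_eq0. apply/eqP. apply: (Nq_eq0 hip).
  apply/eqP. rewrite eq_le (Nq_ge0 hip) andbT.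
  rewrite (NqB hip) (ReS hip) -(hadj x (T x)).
  have e1 : complex.Re (ip (T x) (T x)) = Nq ip x.
    by rewrite -[complex.Re _]/(Nq ip (T x)) -!(hn_sq hip) iso.
  rewrite e1 -!(hn_sq hip).
  have := hhyp (T x). rewrite !iso => hh.
  have := hn_ge0 ip (Tadj (T x)) => ?. nra.
split => // h.
apply/eqP. rewrite eq_sym -subr_eq0. apply/negPn/negP => hq.
set q := h - T (Tadj h) in hq *.
have orth : forall z, complex.Re (ip q (T z)) = 0.
  move=> z. rewrite (ReS hip) /q (ipDr hip) (ipNr hip) !hadj h1.
  by rewrite subrr.
have hq0 : 0 < hnorm ip q.
  rewrite lt_neqAle hn_ge0 andbT eq_sym. apply: contra hq => /eqP e.
  apply/eqP. exact: (hn_eq0 hip e).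
have [k [hk [y [Uy Uky]]]] : exists k, (0 < k)%N /\ exists y,
    hnorm ip (q - y) < hnorm ip q /\ hnorm ip (q - iter k T y) < hnorm ip q.
  apply: hrec; first exact: ball_open.
  exists q. by rewrite subrr (hn0 hip).
case: k hk Uky => // k _ Uky.
have : Nq ip q <= Nq ip (q - iter k.+1 T y).
  rewrite iterS (NqB hip q) orth. have := Nq_ge0 hip (T (iter k T y)). lra.
rewrite -!(hn_sq hip). have := hn_ge0 ip (q - iter k.+1 T y). nra.
Qed.
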